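(* Let $A\in\mathbb{R}^{n\times m}$, let $b\in\mathbb{R}^n$ lie in the span of the columns of $A$, and let $x^*$ be an optimal solution of $\min_{x\in\mathbb{R}^m:\, A x = b} \|x\|_\infty$. Let $r \in \Delta_m$ have strictly positive entries. Then \[ \|x^*\|_\infty^2 \geq b^\top \left(A\,\mathbf{D}(r)^{-1}A^{\top}\right)^+ b . \]
   Context: $\Delta_m=\{p\in\mathbb{R}^m: \sum_i p_i=1,\ p_i\ge 0\}$ is the probability simplex. For a vector $r$, $\mathbf{D}(r)$ is the diagonal matrix with diagonal $r$. For a symmetric matrix $L$, $L^+$ denotes its Moore–Penrose pseudoinverse. *)

(* Defs.v *)
From HB Require Import structures.
From mathcomp Require Import all_boot all_order all_algebra.
From mathcomp Require Import boolp classical_sets reals.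
Set Implicit Arguments. Unset Strict Implicit. Unset Printing Implicit Defensive.
Import Order.TTheory GRing.Theory Num.Theory.
Local Open Scope ring_scope.

Definition is_pinv (R : realType) (k : nat) (L P : 'M[R]_k) : Prop :=
  [/\ L *m P *m L = L, P *m L *m P = P,
      (L *m P)^T = L *m P & (P *m L)^T = P *m L].

(* The Moore-Penrose pseudoinverse L^+ (chosen classically; it exists and is
   unique for real matrices). *)
Definition pinv (R : realType) (k : nat) (L : 'M[R]_k) : 'M[R]_k :=
  xget 0 (fun P => is_pinv L P).

Definition normInf (R : realType) (m : nat) (x : 'cV[R]_m) : R :=
  \big[Num.max/0]_(i < m) `|x i 0|.

Definition Dg (R : realType) (m : nat) (r : 'cV[R]_m) : 'M[R]_m :=
  diag_mx r^T.

(* Main.v *)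
Require Import Defs.
From HB Require Import structures.
From mathcomp Require Import all_boot all_order all_algebra.
From mathcomp Require Import boolp classical_sets reals.
From mathcomp Require Import ring lra.
Import Order.TTheory GRing.Theory Num.Theory.
Local Open Scope ring_scope.

Lemma big_max_ge (R : realType) (I : eqType) (s : seq I) (F : I -> R) i :
  i \in s -> F i <= \big[Num.max/0]_(j <- s) F j.
Proof.
elim: s => // a s IH; rewrite inE big_cons => /orP [/eqP ->|/IH H].
  by rewrite le_max lexx.
by rewrite le_max H orbT.
Qed.

Lemma pinv_sym (R : realType) (k : nat) (L P : 'M[R]_k) :
  L^T = L -> is_pinv L P -> P^T = P.
Proof.
move=> hL [h1 h2 h3 h4].
have h3' : P^T *m L = L *m P by rewrite -h3 trmx_mul hL.
have h4' : L *m P^T = P *m L by rewrite -h4 trmx_mul hL.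
have e1 : P = P *m L *m P^T.
  have e0 : P = P *m P^T *m L by rewrite -mulmxA h3' mulmxA h2.
  rewrite {1}e0 -{1}h1.
  have -> : P *m P^T *m (L *m P *m L) = P *m (P^T *m L) *m (P *m L)
    by rewrite !mulmxA.
  rewrite h3' -{1}h4'.
  by rewrite !mulmxA h2.
by rewrite {1}e1 !trmx_mul trmxK hL mulmxA.
Qed.

Theorem lemma2p1 (R : realType) (n m : nat)
  (A : 'M[R]_(n, m)) (b : 'cV[R]_n) (xs : 'cV[R]_m) (r : 'cV[R]_m)
  (hb : exists y : 'cV[R]_m, A *m y = b)
  (hxs : A *m xs = b)
  (hopt : forall x : 'cV[R]_m, A *m x = b -> normInf xs <= normInf x)
  (hr_pos : forall i : 'I_m, 0 < r i 0)
  (hr_sum : \sum_(i < m) r i 0 = 1) :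
  (b^T *m pinv (A *m invmx (Dg r) *m A^T) *m b) 0 0 <= normInf xs ^+ 2.
Proof.
set W := diag_mx (\row_j (r j 0)^-1).
have hW : invmx (Dg r) = W.
  have hDW : Dg r *m W = 1%:M.
    rewrite /Dg /W mulmx_diag -diag_const_mx; congr diag_mx.
    apply/matrixP => i j; rewrite !mxE mulfV //.
    by apply/lt0r_neq0.
  have [hu _] := mulmx1_unit hDW.
  by rewrite -[W](mulKmx hu) hDW mulmx1.
rewrite hW.
set L := A *m W *m A^T.
have hL : L^T = L by rewrite /L !trmx_mul trmxK tr_diag_mx mulmxA.
set N := normInf xs.
have hN : forall i, `|xs i 0| <= N.
  move=> i; rewrite /N /normInf; apply: (@big_max_ge R _ (index_enum _) (fun i => `|xs i 0|) i); exact: mem_index_enum.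
have [hP|hN0] := pselect (exists P, is_pinv L P); last first.
  rewrite /pinv xgetPN; last by move=> P HP; apply: hN0; exists P.
  rewrite mulmx0 mul0mx mxE; exact: sqr_ge0.
have HP := xgetPex 0 hP.
rewrite -/(pinv L).
move: HP; rewrite -/(pinv L); set P := pinv L => HP.
have hPs := @pinv_sym R n L P hL HP.
case: HP => _ h2 _ _.
set c := A^T *m P *m b.
have I1 : b^T *m P *m b = xs^T *m c.
  by rewrite /c -hxs trmx_mul !mulmxA.
have I2 : c^T *m W *m c = b^T *m P *m b.
  rewrite /c !trmx_mul trmxK hPs.
  rewrite -!mulmxA; congr (_ *m _); rewrite !mulmxA -[P *m A *m W *m A^T]mulmxA.
  have -> : P *m A *m (W *m A^T) = P *m L by rewrite /L !mulmxA.
  by rewrite h2.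
have E1 : (b^T *m P *m b) 0 0 = \sum_i xs i 0 * c i 0.
  by rewrite I1 mxE; apply: eq_bigr => i _; rewrite mxE.
have E2 : (b^T *m P *m b) 0 0 = \sum_i c i 0 ^+ 2 / r i 0.
  rewrite -I2 /W mul_mx_diag mxE; apply: eq_bigr => i _.
  by rewrite !mxE expr2 mulrAC.
have H0 : 0 <= \sum_i (r i 0 * xs i 0 ^+ 2 - 2 * (xs i 0 * c i 0) + c i 0 ^+ 2 / r i 0).
  apply: sumr_ge0 => i _.
  have hr := hr_pos i.
  have -> : r i 0 * xs i 0 ^+ 2 - 2 * (xs i 0 * c i 0) + c i 0 ^+ 2 / r i 0
     = r i 0 * (xs i 0 - c i 0 / r i 0) ^+ 2.
    by field; apply/lt0r_neq0.
  by apply: mulr_ge0; [apply: ltW|apply: sqr_ge0].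
rewrite big_split /= sumrB -mulr_sumr -E1 -E2 in H0.
have H1 : \sum_i r i 0 * xs i 0 ^+ 2 <= N ^+ 2.
  rewrite -[N ^+ 2]mul1r -hr_sum mulr_suml; apply: ler_sum => i _.
  rewrite ler_pM2l //.
  have := hN i; rewrite ler_norml => /andP [ha hb']; nra.
lra.
Qed.
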